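(* Let $A$ and $B$ be commutative torsion groups such that $B[p^\infty]=\{0\}$ for all but finitely many primes $p$. Identify $A=\bigoplus_p A[p^\infty]$ and $B=\bigoplus_p B[p^\infty]$ (sums over all primes), and regard $f_\bullet=(f_p)_p\in\bigoplus_p B[p^\infty]^{A[p^\infty]}$ as the map $(x_p)_p\mapsto(f_p(x_p))_p$. Then: (a) $\operatorname{fdeg}(f_\bullet)=\max_p\operatorname{fdeg}(f_p)$ for all such $f_\bullet$; (b) $\mathcal F_n(A,B)=\bigoplus_p\mathcal F_n(A[p^\infty],B[p^\infty])$ for all $n\in\mathbb N\cup\{-\infty\}$; (c) $\mathcal F(A,B)=\bigoplus_p\mathcal F(A[p^\infty],B[p^\infty])$.
   Context: For commutative groups $A,B$, $B^A$ denotes the commutative group (under pointwise addition) of all maps $A\to B$. For $a\in A$, the difference operator $\Delta_a:B^A\to B^A$ is $(\Delta_a f)(x)=f(x+a)-f(x)$. Let $\widetilde{\mathbb N}=\mathbb N\cup\{-\infty,\infty\}$ ($\mathbb N=\{0,1,2,\dots\}$), totally ordered with $-\infty$ least and $\infty$ greatest. The functional degree $\operatorname{fdeg}(f)\in\widetilde{\mathbb N}$ of $f\in B^A$ is: $-\infty$ if $f=0$; otherwise the least $n\in\mathbb N$ such that $\Delta_{a_1}\cdots\Delta_{a_{n+1}}f=0$ for all $a_1,\dots,a_{n+1}\in A$; and $\infty$ if no such $n$ exists. For $n\in\widetilde{\mathbb N}$, $\mathcal F_n(A,B)=\{f\in B^A:\operatorname{fdeg}(f)\le n\}$, and $\mathcal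 F(A,B)=\bigcup_{n<\infty}\mathcal F_n(A,B)$. For a prime $p$, $A[p^\infty]=\{x\in A:p^kx=0\text{ for some }k\ge1\}$. *)

(* Defs.v *)
From HB Require Import structures.
From mathcomp Require Import all_boot all_order all_algebra.
From mathcomp Require Import boolp.
Set Implicit Arguments. Unset Strict Implicit. Unset Printing Implicit Defensive.
Import Order.TTheory GRing.Theory Num.Theory.
Local Open Scope ring_scope.

Definition Delta (A B : zmodType) (a : A) (f : A -> B) : A -> B :=
  fun x => f (x + a) - f x.

Definition Deltas (A B : zmodType) (s : seq A) (f : A -> B) : A -> B :=
  foldr (@Delta A B) f s.

Definition diff_vanish (A B : zmodType) (f : A -> B) (n : nat) : Prop :=
  forall s : seq A, size s = n.+1 -> forall x : A, Deltas s f x = 0.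

Inductive extnat := ENegInf | EFin of nat | EPosInf.

Definition extnat_le (m n : extnat) : bool :=
  match m, n with
  | ENegInf, _ => true
  | _, EPosInf => true
  | EFin a, EFin b => (a <= b)%N
  | _, _ => false
  end.


Definition fdeg (A B : zmodType) (f : A -> B) : extnat :=
  if pselect (f = (fun _ => 0)) is left _ then ENegInf else
  if pselect (exists n, `[< diff_vanish f n >]) is left H then EFin (ex_minn H)
  else EPosInf.

Definition Fn (A B : zmodType) (n : extnat) : (A -> B) -> Prop :=
  fun f => extnat_le (fdeg f) n.
Definition Ffin (A B : zmodType) : (A -> B) -> Prop :=
  fun f => exists n : nat, Fn (EFin n) f.

Definition torsion (A : zmodType) : Prop :=
  forall x : A, exists n : nat, (0 < n)%N /\ x *+ n = 0.

Definition ptor (A : zmodType) (p : nat) : {pred A} :=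
  fun x => `[< exists k : nat, (0 < k)%N /\ x *+ (p ^ k) = 0 >].
Arguments ptor : clear implicits.

Fact ptor_zmod_closed (A : zmodType) (p : nat) : zmod_closed (ptor A p).
Proof.
split.
  by apply/asboolP; exists 1%N; rewrite mul0rn.
move=> x y /asboolP[k [k0 hx]] /asboolP[l [l0 hy]].
apply/asboolP; exists (k + l)%N; split; first by rewrite addn_gt0 k0.
rewrite mulrnBl expnD.
have -> : x *+ (p ^ k * p ^ l) = 0 by rewrite mulrnA hx mul0rn.
by rewrite mulnC mulrnA hy mul0rn subr0.
Qed.
HB.instance Definition _ (A : zmodType) (p : nat) :=
  GRing.isZmodClosed.Build A (ptor A p) (ptor_zmod_closed A p).

Definition ptors (A : zmodType) (p : nat) := {x : A | x \in ptor A p}.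
HB.instance Definition _ (A : zmodType) (p : nat) :=
  [isSub of ptors A p for @sval A _].
HB.instance Definition _ (A : zmodType) (p : nat) :=
  [Choice of ptors A p by <:].
HB.instance Definition _ (A : zmodType) (p : nat) :=
  [SubChoice_isSubZmodule of ptors A p by <:].

Definition coptor (A : zmodType) (p : nat) : {pred A} :=
  fun x => `[< exists m : nat, [/\ (0 < m)%N, coprime m p & x *+ m = 0] >].
Arguments coptor : clear implicits.

(* p-component x_p of x in A = (+)_p A[p^oo]: the y in A[p^oo] with
   x - y annihilated by an integer prime to p (0 if no such y exists,
   which does not happen for torsion A). *)
Definition pcomp (A : zmodType) (p : nat) (x : A) : A :=
  if pselect (exists y : A, y \in ptor A p /\ x - y \in coptor A p)
  is left H then projT1 (cid H) else 0.

Definition pproj (A : zmodType) (p : nat) (x : A) : ptors A p :=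
  insubd 0 (pcomp p x).

(* f_bullet: the map (x_p)_p |-> (f_p(x_p))_p, where S is a finite list of
   distinct primes outside of which B[p^oo] = 0 (so the other components
   of the image vanish). *)
Definition fbullet (A B : zmodType) (S : seq nat)
    (f : forall p : nat, ptors A p -> ptors B p) : A -> B :=
  fun x => \sum_(p <- S) val (f p (pproj p x)).

(* Main.v *)
Require Import Defs.
From HB Require Import structures.
From mathcomp Require Import all_boot all_order all_algebra.
From mathcomp Require Import boolp.
Require Import Defs.
Set Implicit Arguments. Unset Strict Implicit. Unset Printing Implicit Defensive.
Import GRing.Theory.
Local Open Scope ring_scope.

Lemma ptorP (A : zmodType) p (x : A) :
  x \in ptor A p <-> exists k, (0 < k)%N /\ x *+ (p ^ k) = 0.
Proof. by split => [/asboolP|H]; [|apply/asboolP]. Qed.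

Lemma coptorP (A : zmodType) p (x : A) :
  x \in coptor A p <-> exists m, [/\ (0 < m)%N, coprime m p & x *+ m = 0].
Proof. by split => [/asboolP|H]; [|apply/asboolP]. Qed.

Lemma mulrn_gcd (A : zmodType) (x : A) a b :
  x *+ a = 0 -> x *+ b = 0 -> x *+ gcdn a b = 0.
Proof.
move=> ha hb; case: (posnP a) => [->|a0]; first by rewrite gcd0n.
case: (Bezoutl b a0) => u _ /dvdnP [w hw].
have : x *+ (gcdn a b + u * b) = 0 by rewrite hw mulnC mulrnA ha mul0rn.
by rewrite mulrnDr mulnC mulrnA hb mul0rn addr0.
Qed.

Lemma mulrn_coprime (A : zmodType) (x : A) a b :
  coprime a b -> x *+ a = 0 -> x *+ b = 0 -> x = 0.
Proof. by move=> /eqP cab ha hb; have := mulrn_gcd ha hb; rewrite cab. Qed.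

Lemma mulrn_modE (A : zmodType) (x : A) N a b :
  x *+ N = 0 -> a = b %[mod N] -> x *+ a = x *+ b.
Proof.
move=> hN hab.
rewrite (divn_eq a N) (divn_eq b N) hab !mulrnDr.
by rewrite !(mulnC _ N) !mulrnA hN !mul0rn.
Qed.

Lemma ptor_coptor0 (A : zmodType) p (x : A) : prime p ->
  x \in ptor A p -> x \in coptor A p -> x = 0.
Proof.
move=> pp /ptorP [k [_ hk]] /coptorP [m [_ cm hm]].
apply: (mulrn_coprime _ hk hm).
by apply: coprimeXl; rewrite coprime_sym.
Qed.

Lemma coptor0 (A : zmodType) p : (0 : A) \in coptor A p.
Proof. by apply/coptorP; exists 1%N; rewrite mul0rn coprime1n. Qed.

Lemma coptorB (A : zmodType) p (x y : A) :
  x \in coptor A p -> y \in coptor A p -> x - y \in coptor A p.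
Proof.
move=> /coptorP [m [m0 cm hm]] /coptorP [l [l0 cl hl]].
apply/coptorP; exists (m * l)%N; split.
- by rewrite muln_gt0 m0.
- by rewrite coprimeMl cm.
- by rewrite mulrnBl mulrnA hm mul0rn mulnC mulrnA hl mul0rn subr0.
Qed.

Lemma coptorN (A : zmodType) p (x : A) : x \in coptor A p -> - x \in coptor A p.
Proof. by move=> h; rewrite -sub0r coptorB // coptor0. Qed.

Lemma coptorD (A : zmodType) p (x y : A) :
  x \in coptor A p -> y \in coptor A p -> x + y \in coptor A p.
Proof. by move=> hx hy; rewrite -(opprK y) coptorB // coptorN. Qed.

Lemma ptor_coptor (A : zmodType) p q (x : A) : prime p -> prime q -> p != q ->
  x \in ptor A q -> x \in coptor A p.
Proof.
move=> pp pq pq' /ptorP [k [_ hk]]; apply/coptorP; exists (q ^ k)%N; split => //.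
- by rewrite expn_gt0 prime_gt0.
- by apply: coprimeXl; rewrite prime_coprime // dvdn_prime2 // eq_sym.
Qed.

Lemma pcomp_exists (A : zmodType) p (x : A) : torsion A -> prime p ->
  exists y : A, y \in ptor A p /\ x - y \in coptor A p.
Proof.
move=> hA pp; have [n [n0 hn]] := hA x.
set q := (n`_p)%N; set m := (n`_p^')%N.
have hqm : (q * m)%N = n by rewrite partnC.
have cqm : coprime q m by apply: coprime_partC.
set c := chinese q m 1 0.
have c1 := chinese_modl cqm 1 0; have c0 := chinese_modr cqm 1 0.
exists (x *+ c); split.
  apply/ptorP; exists (logn p n).+1; split => //.
  rewrite -mulrnA expnS.
  have : (n %| c * (p * p ^ logn p n))%N.
    rewrite -p_part -/q -{1}hqm mulnC.
    have hm : (m %| c)%N by apply/eqP; rewrite c0 mod0n.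
    by rewrite dvdn_mul // dvdn_mull.
  by move=> /dvdnP [w ->]; rewrite mulnC mulrnA hn mul0rn.
apply/coptorP; exists m; split.
- exact: part_gt0.
- by rewrite coprime_sym prime_coprime // -p'natE // part_pnat.
- rewrite mulrnBl -mulrnA (mulrn_modE (N := n) (b := m) hn) ?subrr //.
  rewrite -hqm -muln_modl c1 muln_modl.
  by rewrite mul1n.
Qed.


Lemma pcompP (A : zmodType) p (x : A) : torsion A -> prime p ->
  pcomp p x \in ptor A p /\ x - pcomp p x \in coptor A p.
Proof.
move=> hA pp; rewrite /pcomp; case: pselect => [H|nH].
  exact: (projT2 (cid H)).
by exfalso; apply: nH; apply: pcomp_exists.
Qed.

Lemma pcomp_uniq (A : zmodType) p (x y : A) : torsion A -> prime p ->
  y \in ptor A p -> x - y \in coptor A p -> pcomp p x = y.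
Proof.
move=> hA pp hy hxy; have [h1 h2] := pcompP x hA pp.
apply/eqP; rewrite -subr_eq0; apply/eqP; apply: (ptor_coptor0 pp).
  by rewrite rpredB.
have -> : pcomp p x - y = (x - y) - (x - pcomp p x).
  by rewrite opprB [RHS]addrC addrA subrK.
exact: coptorB.
Qed.

Lemma pcomp_id (A : zmodType) p (y : A) : torsion A -> prime p ->
  y \in ptor A p -> pcomp p y = y.
Proof. by move=> hA pp hy; apply: pcomp_uniq => //; rewrite subrr coptor0. Qed.

Lemma pcomp_co (A : zmodType) p (y : A) : torsion A -> prime p ->
  y \in coptor A p -> pcomp p y = 0.
Proof. by move=> hA pp hy; apply: pcomp_uniq => //; rewrite ?rpred0 ?subr0. Qed.

Lemma pcompD (A : zmodType) p (x y : A) : torsion A -> prime p ->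
  pcomp p (x + y) = pcomp p x + pcomp p y.
Proof.
move=> hA pp; have [h1 h2] := pcompP x hA pp; have [h3 h4] := pcompP y hA pp.
apply: pcomp_uniq => //; first by rewrite rpredD.
have -> : x + y - (pcomp p x + pcomp p y) = (x - pcomp p x) + (y - pcomp p y).
  by rewrite opprD addrACA.
exact: coptorD.
Qed.

Lemma pcomp0 (A : zmodType) p : torsion A -> prime p -> pcomp p (0 : A) = 0.
Proof. by move=> hA pp; apply: pcomp_co => //; apply: coptor0. Qed.

Lemma pcompB (A : zmodType) p (x y : A) : torsion A -> prime p ->
  pcomp p (x - y) = pcomp p x - pcomp p y.
Proof.
move=> hA pp; apply/eqP; rewrite -subr_eq0 opprB addrA -pcompD // subrK.
by rewrite subrr.
Qed.

Lemma pcomp_sum (A : zmodType) p (I : Type) (r : seq I) (F : I -> A) :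
  torsion A -> prime p ->
  pcomp p (\sum_(i <- r) F i) = \sum_(i <- r) pcomp p (F i).
Proof.
move=> hA pp; elim: r => [|a r IH]; first by rewrite !big_nil pcomp0.
by rewrite !big_cons pcompD // IH.
Qed.

Lemma pproj_val (A : zmodType) p (x : A) : torsion A -> prime p ->
  val (pproj p x) = pcomp p x.
Proof. by move=> hA pp; rewrite /pproj insubdK //; case: (pcompP x hA pp). Qed.

Lemma val_pproj (A : zmodType) p (z : ptors A p) : torsion A -> prime p ->
  pproj p (val z) = z.
Proof. by move=> hA pp; apply: val_inj; rewrite pproj_val // pcomp_id // (valP z). Qed.

Lemma pprojD (A : zmodType) p (x y : A) : torsion A -> prime p ->
  pproj p (x + y) = pproj p x + pproj p y.
Proof. by move=> hA pp; apply: val_inj; rewrite raddfD /= !pproj_val // pcompD. Qed.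

Lemma pprojB (A : zmodType) p (x y : A) : torsion A -> prime p ->
  pproj p (x - y) = pproj p x - pproj p y.
Proof. by move=> hA pp; apply: val_inj; rewrite raddfB /= !pproj_val // pcompB. Qed.

Lemma pproj0 (A : zmodType) p : torsion A -> prime p -> pproj p (0 : A) = 0.
Proof. by move=> hA pp; apply: val_inj; rewrite pproj_val // pcomp0. Qed.

Lemma coptor_all0 (A : zmodType) (c : A) : torsion A ->
  (forall p, prime p -> c \in coptor A p) -> c = 0.
Proof.
move=> hA hc; have [n [n0 hn]] := hA c.
elim/ltn_ind: n n0 hn => n IH n0 hn.
case: (ltngtP n 1) => [n_lt1|n1|n_eq1].
- by move: n_lt1; rewrite ltnS leqn0 => /eqP n00; rewrite n00 in n0.
- have pp := pdiv_prime n1.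
  have [m [m0 cm hm]] := (coptorP _ _).1 (hc _ pp).
  have hg := mulrn_gcd hn hm.
  apply: (IH (gcdn n m)) => //; last by rewrite gcdn_gt0 n0.
  rewrite ltn_neqAle dvdn_leq ?dvdn_gcdl // andbT.
  apply/negP => /eqP hgn.
  have : (pdiv n %| m)%N by rewrite (dvdn_trans (pdiv_dvd n)) // -hgn dvdn_gcdr.
  by move=> hd; move: cm; rewrite coprime_sym prime_coprime // hd.
- by rewrite -(mulr1n c) -n_eq1 hn.
Qed.


Lemma Deltas_cons (A B : zmodType) a s (G : A -> B) x :
  Deltas (a :: s) G x = Deltas s G (x + a) - Deltas s G x.
Proof. by []. Qed.

Lemma Deltas_comp (A A' B B' : zmodType) (h : A' -> A) (k : B -> B') (G : A -> B) s x :
  (forall u v, h (u + v) = h u + h v) -> (forall u v, k (u - v) = k u - k v) ->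
  Deltas s (fun y => k (G (h y))) x = k (Deltas (map h s) G (h x)).
Proof.
move=> hh hk; elim: s x => [|a s IH] x //.
by rewrite Deltas_cons !IH -hk hh.
Qed.

Lemma Deltas_sum (A B : zmodType) (I : Type) (r : seq I) (G : I -> A -> B) s x :
  Deltas s (fun y => \sum_(i <- r) G i y) x = \sum_(i <- r) Deltas s (G i) x.
Proof.
elim: s x => [|a s IH] x //.
rewrite Deltas_cons !IH -sumrB; apply: eq_bigr => i _; by rewrite Deltas_cons.
Qed.

Lemma Deltas0s (A B : zmodType) s (G : A -> B) x : Deltas (0 :: s) G x = 0.
Proof. by rewrite Deltas_cons addr0 subrr. Qed.

Lemma Deltas_zero (A B : zmodType) s x : Deltas s (fun _ : A => (0 : B)) x = 0.
Proof. by elim: s x => [|a s IH] x //; rewrite Deltas_cons !IH subrr. Qed.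

Lemma dv_succ (A B : zmodType) (g : A -> B) n :
  diff_vanish g n -> diff_vanish g n.+1.
Proof.
move=> h [|a s] // [hs] x.
by rewrite Deltas_cons !h ?subrr.
Qed.

Lemma dv_mono (A B : zmodType) (g : A -> B) n m :
  diff_vanish g n -> (n <= m)%N -> diff_vanish g m.
Proof.
move=> h; elim: m => [|m IH]; first by rewrite leqn0 => /eqP <-.
rewrite leq_eqVlt => /orP [/eqP <- //|]; rewrite ltnS => /IH; exact: dv_succ.
Qed.

Lemma dv_zero (A B : zmodType) n : diff_vanish (fun _ : A => (0 : B)) n.
Proof. by move=> s _ x; apply: Deltas_zero. Qed.

Lemma fdeg_char0 (A B : zmodType) (g : A -> B) :
  extnat_le (fdeg g) ENegInf <-> g = (fun _ => 0).
Proof.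
rewrite /fdeg; case: pselect => [g0|gn0] //.
by case: pselect => [H|nH].
Qed.

Lemma fdeg_charN (A B : zmodType) (g : A -> B) n :
  extnat_le (fdeg g) (EFin n) <-> diff_vanish g n.
Proof.
rewrite /fdeg; case: pselect => [g0|gn0]; first by split => // _; rewrite g0; apply: dv_zero.
case: pselect => [H|nH] /=.
  case: ex_minnP => m /asboolP hm hmin; split => [hmn|hn]; first exact: dv_mono hm hmn.
  by apply: hmin; apply/asboolP.
by split => // hn; exfalso; apply: nH; exists n; apply/asboolP.
Qed.

Lemma extnat_le_top (e : extnat) : extnat_le e EPosInf.
Proof. by case: e. Qed.

Lemma extnat_le_trans (a b c : extnat) : extnat_le a b -> extnat_le b c -> extnat_le a c.
Proof. case: a => [|x|]; case: b => [|y|]; case: c => [|z|] //=; exact: leq_trans. Qed.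

Lemma extnat_le_refl (a : extnat) : extnat_le a a.
Proof. by case: a => //= n; exact: leqnn. Qed.

Lemma extnat_le_anti (a b : extnat) : extnat_le a b -> extnat_le b a -> a = b.
Proof. case: a => [|m|]; case: b => [|n|] //= h1 h2; by congr EFin; apply/eqP; rewrite eqn_leq h1 h2. Qed.

Lemma extnat_le_total (a b : extnat) : extnat_le a b \/ extnat_le b a.
Proof. case: a => [|m|]; case: b => [|n|] //=; try by [left|right]. exact/orP/leq_total. Qed.

Lemma Deltas_nseqS (A B : zmodType) (a : A) k (G : A -> B) :
  Deltas (nseq k.+1 a) G = Deltas (nseq k a) (Delta a G).
Proof. by elim: k => [|k IH] //=; rewrite -IH. Qed.

Lemma invariance (A B : zmodType) p (G : A -> B) n (a : A) :
  prime p -> (forall y, G y \in ptor B p) -> diff_vanish G n ->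
  a \in coptor A p -> forall y, G (y + a) = G y.
Proof.
move=> pp hG hv /coptorP [m [m0 cm hm]].
have : forall y, Deltas (nseq n.+1 a) G y = 0 by move=> y; apply: hv; rewrite size_nseq.
elim: n G hG {hv} => [|k IH] G hG hv y.
  by apply/eqP; rewrite -subr_eq0; apply/eqP; apply: (hv y).
have hG' : forall y, Delta a G y \in ptor B p by move=> z; rewrite rpredB.
have hv' : forall y, Deltas (nseq k.+1 a) (Delta a G) y = 0 by move=> z; rewrite -Deltas_nseqS.
have hc := IH _ hG' hv'.
set c := Delta a G y.
have ht : forall t, G (y + a *+ t) = G y + c *+ t.
  elim=> [|t IHt]; first by rewrite !mulr0n !addr0.
  have e1 : Delta a G (y + a *+ t) = c.
    rewrite /c; elim: t {IHt} => [|t IHt]; first by rewrite mulr0n addr0.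
    by rewrite mulrSr addrA hc.
  have : G (y + a *+ t + a) = G (y + a *+ t) + Delta a G (y + a *+ t).
    by rewrite /Delta addrCA subrr addr0.
  by move=> h; rewrite mulrSr addrA h e1 IHt -addrA -mulrSr.
have hcm : c *+ m = 0.
  by have := ht m; rewrite hm addr0 => h; apply: (addrI (G y)); rewrite addr0 -h.
have [j [_ hj]] := (ptorP _ _).1 (hG' y).
have : c = 0 by apply: (mulrn_coprime _ hj hcm); apply: coprimeXl; rewrite coprime_sym.
by rewrite /c /Delta => /eqP; rewrite subr_eq0 => /eqP.
Qed.


Lemma triv_ptors (B : zmodType) p (z : ptors B p) :
  (forall b : B, b \in ptor B p -> b = 0) -> z = 0.
Proof. by move=> h; apply: val_inj; rewrite raddf0; apply: h; apply: valP. Qed.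

Lemma L1 (A B : zmodType) (S : seq nat) (hA : torsion A) (hB : torsion B)
  (hSu : uniq S) (hSp : all prime S)
  (hS : forall p : nat, prime p -> p \notin S -> forall b : B, b \in ptor B p -> b = 0)
  (f : forall p : nat, ptors A p -> ptors B p) n :
  diff_vanish (fbullet S f) n <-> forall p, prime p -> diff_vanish (f p) n.
Proof.
split.
- move=> h p pp s hs y; case: (boolP (p \in S)) => pS; last by apply: triv_ptors; apply: hS.
  apply: val_inj; rewrite raddf0.
  have := h (map val s); rewrite size_map => /(_ hs (val y)).
  rewrite /fbullet Deltas_sum (bigD1_seq p) // big1_seq ?addr0.
    rewrite (Deltas_comp _ _ _ (fun u v => pprojD u v hA pp) (fun u v => raddfB _ u v)).
    have -> : map (pproj p) (map val s) = s.
      by rewrite -map_comp -{2}(map_id s); apply: eq_map => z /=; rewrite val_pproj.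
    by rewrite val_pproj // => <-; rewrite /= addr0.
  move=> q /andP [qp qS]; have pq := allP hSp q qS.
  rewrite (Deltas_comp _ _ _ (fun u v => pprojD u v hA pq) (fun u v => raddfB _ u v)).
  case: s hs => [//|a s] _; rewrite !map_cons.
  have -> : pproj q (val a) = 0.
    apply: val_inj; rewrite pproj_val // raddf0; apply: pcomp_co => //.
    by apply: (ptor_coptor (q := p)) => //; rewrite ?eq_sym ?(valP a).
  by rewrite Deltas0s raddf0.
- move=> h s hs x; rewrite /fbullet Deltas_sum big1_seq // => q /andP [_ qS].
  have pq := allP hSp q qS.
  rewrite (Deltas_comp _ _ _ (fun u v => pprojD u v hA pq) (fun u v => raddfB _ u v)).
  by rewrite h ?size_map // raddf0.
Qed.

Lemma L2 (A B : zmodType) (S : seq nat) (hA : torsion A) (hB : torsion B)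
  (hSu : uniq S) (hSp : all prime S)
  (hS : forall p : nat, prime p -> p \notin S -> forall b : B, b \in ptor B p -> b = 0)
  (f : forall p : nat, ptors A p -> ptors B p) :
  fbullet S f = (fun _ => 0) <-> forall p, prime p -> f p = (fun _ => 0).
Proof.
split.
- move=> h p pp; apply: funext => y.
  case: (boolP (p \in S)) => pS; last by apply: triv_ptors; apply: hS.
  apply: val_inj; rewrite raddf0.
  have := congr1 (fun g => pcomp p (g (val y))) h.
  rewrite /= pcomp0 // /fbullet pcomp_sum // (bigD1_seq p) // big1_seq.
    by rewrite val_pproj // pcomp_id ?(valP (f p y)) // => <-; rewrite /= addr0.
  move=> q /andP [qp qS]; have pq := allP hSp q qS.
  by apply: pcomp_co => //; apply: (ptor_coptor pp pq _ (valP _)); rewrite eq_sym.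
- move=> h; apply: funext => x; rewrite /fbullet big1_seq // => q /andP [_ qS].
  by rewrite (h q (allP hSp q qS)) raddf0.
Qed.

Lemma P3 (B : zmodType) (S : seq nat) (hB : torsion B)
  (hSu : uniq S) (hSp : all prime S)
  (hS : forall p : nat, prime p -> p \notin S -> forall b : B, b \in ptor B p -> b = 0)
  (b : B) : b = \sum_(p <- S) pcomp p b.
Proof.
apply/eqP; rewrite -subr_eq0; apply/eqP; apply: (coptor_all0 hB) => p pp.
set c := _ - _.
suff hc : pcomp p c = 0 by have := (pcompP c hB pp).2; rewrite hc subr0.
rewrite /c pcompB // pcomp_sum //.
case: (boolP (p \in S)) => pS.
  rewrite (bigD1_seq p) // big1_seq.
    by rewrite /= addr0 (pcomp_id hB pp (pcompP b hB pp).1) subrr.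
  move=> q /andP [qp qS]; have pq := allP hSp q qS.
  by apply: pcomp_co => //; apply: (ptor_coptor pp pq _ (pcompP b hB pq).1); rewrite eq_sym.
rewrite big1_seq ?subr0.
  by apply: (hS p pp pS); case: (pcompP b hB pp).
move=> q /andP [_ qS]; have pq := allP hSp q qS.
apply: pcomp_co => //; apply: (ptor_coptor pp pq _ (pcompP b hB pq).1).
by apply/eqP => epq; rewrite epq qS in pS.
Qed.


Lemma Ldec (A B : zmodType) (S : seq nat) (hA : torsion A) (hB : torsion B)
  (hSu : uniq S) (hSp : all prime S)
  (hS : forall p : nat, prime p -> p \notin S -> forall b : B, b \in ptor B p -> b = 0)
  (F : A -> B) n : diff_vanish F n ->
  F = fbullet S (fun p (y : ptors A p) => pproj p (F (val y))).
Proof.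
move=> hv; apply: funext => x; rewrite /fbullet {1}(P3 hB hSu hSp hS (F x)).
apply: eq_big_seq => p pS; have pp := allP hSp p pS.
rewrite !pproj_val //.
have hG : forall y, pcomp p (F y) \in ptor B p by move=> y; case: (pcompP (F y) hB pp).
have hvG : diff_vanish (fun y => pcomp p (F y)) n.
  move=> s hs z.
  rewrite [LHS](_ : _ = pcomp p (Deltas (map id s) F (id z))); last first.
    exact: (Deltas_comp _ _ _ (fun _ _ => erefl) (fun u v => pcompB u v hB pp)).
  by rewrite map_id hv // pcomp0.
have := invariance pp hG hvG (pcompP x hA pp).2 (pcomp p x).
by rewrite addrC subrK.
Qed.

Lemma Lmain (A B : zmodType) (S : seq nat) (hA : torsion A) (hB : torsion B)
  (hSu : uniq S) (hSp : all prime S)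
  (hS : forall p : nat, prime p -> p \notin S -> forall b : B, b \in ptor B p -> b = 0)
  (f : forall p : nat, ptors A p -> ptors B p) e :
  extnat_le (fdeg (fbullet S f)) e <-> forall p, prime p -> extnat_le (fdeg (f p)) e.
Proof.
case: e => [|n|].
- rewrite fdeg_char0 (L2 hA hB hSu hSp hS).
  by split => h p pp; [apply/fdeg_char0; apply: h | apply/fdeg_char0; apply: h].
- rewrite fdeg_charN (L1 hA hB hSu hSp hS).
  by split => h p pp; [apply/fdeg_charN; apply: h | apply/fdeg_charN; apply: h].
- by split => [_ p _|_]; apply: extnat_le_top.
Qed.

Lemma outside0 (A B : zmodType) (S : seq nat)
  (hS : forall p : nat, prime p -> p \notin S -> forall b : B, b \in ptor B p -> b = 0)
  (f : forall p : nat, ptors A p -> ptors B p) p e :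
  prime p -> p \notin S -> extnat_le (fdeg (f p)) e.
Proof.
move=> pp pS; apply: (@extnat_le_trans _ ENegInf); last by [].
apply/fdeg_char0; apply: funext => y; apply: triv_ptors; exact: hS.
Qed.

Lemma exmax (d : nat -> extnat) (T : seq nat) : all prime T ->
  exists p, prime p /\ forall q, q \in T -> extnat_le (d q) (d p).
Proof.
elim: T => [|q T IH] /=; first by move=> _; exists 2%N.
move=> /andP [pq /IH [p [pp hp]]].
case: (extnat_le_total (d q) (d p)) => hqp.
  exists p; split => // r; rewrite inE => /orP [/eqP -> //|]; exact: hp.
exists q; split => // r; rewrite inE => /orP [/eqP -> //|rT].
  exact: extnat_le_refl.
exact: extnat_le_trans (hp r rT) hqp.
Qed.

Lemma bound (A B : zmodType) (f : forall p : nat, ptors A p -> ptors B p) (T : seq nat) :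
  (forall p, p \in T -> exists n, Fn (EFin n) (f p)) ->
  exists N, forall p, p \in T -> Fn (EFin N) (f p).
Proof.
elim: T => [|q T IH] h; first by exists 0%N.
have [N hN] : exists N, forall p, p \in T -> Fn (EFin N) (f p).
  by apply: IH => p pT; apply: h; rewrite inE pT orbT.
have [m hm] := h q (mem_head _ _).
exists (maxn m N) => p; rewrite inE => /orP [/eqP ->|pT].
  by apply: extnat_le_trans hm _; rewrite /= leq_maxl.
by apply: extnat_le_trans (hN p pT) _; rewrite /= leq_maxr.
Qed.


Unset Implicit Arguments.

Theorem corollary3 (A B : zmodType) (S : seq nat)
  (hA : torsion A) (hB : torsion B)
  (hSu : uniq S) (hSp : all prime S)
  (hS : forall p : nat, prime p -> p \notin S -> forall b : B, b \in ptor B p -> b = 0) :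
  (* (a) *)
  (forall f : forall p : nat, ptors A p -> ptors B p,
      (forall p : nat, prime p -> extnat_le (fdeg (f p)) (fdeg (fbullet S f))) /\
      (exists p : nat, prime p /\ fdeg (f p) = fdeg (fbullet S f)))
  /\
  (* (b) *)
  (forall n : extnat, n <> EPosInf -> forall F : A -> B,
      Fn n F <->
      exists f : forall p : nat, ptors A p -> ptors B p,
        (forall p : nat, prime p -> Fn n (f p)) /\ F = fbullet S f)
  /\
  (* (c) *)
  (forall F : A -> B,
      Ffin F <->
      exists f : forall p : nat, ptors A p -> ptors B p,
        (forall p : nat, prime p -> Ffin (f p)) /\ F = fbullet S f).
Proof.
have LM := Lmain hA hB hSu hSp hS.
have partb : forall n : extnat, n <> EPosInf -> forall F : A -> B,
      Fn n F <->
      exists f : forall p : nat, ptors A p -> ptors B p,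
        (forall p : nat, prime p -> Fn n (f p)) /\ F = fbullet S f.
  move=> n nI F; split; last by move=> [f [hf ->]]; apply/LM.
  move=> hF.
  have [m hm] : exists m, diff_vanish F m.
    case: n nI hF => [|m|] // _.
      by rewrite /Fn fdeg_char0 => ->; exists 0%N; apply: dv_zero.
    by rewrite /Fn fdeg_charN => h; exists m.
  have HF := Ldec hA hB hSu hSp hS hm.
  eexists; split; last exact: HF.
  by apply/LM; rewrite -HF.
split; [|split] => //.
- move=> f; split.
    by apply/LM; apply: extnat_le_refl.
  have [p [pp hp]] := exmax (fun q => fdeg (f q)) hSp.
  have hall : forall q, prime q -> extnat_le (fdeg (f q)) (fdeg (f p)).
    move=> q pq; case: (boolP (q \in S)) => qS; first exact: hp.
    by apply: (outside0 hS).
  exists p; split => //; apply: extnat_le_anti.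
    by apply: (LM f (fdeg (fbullet S f))).1 (extnat_le_refl _) p pp.
  exact: (LM f (fdeg (f p))).2 hall.
- move=> F; split.
    move=> [n hn]; have [f [hf ->]] := (partb (EFin n) (fun h => match h with end) F).1 hn.
    by exists f; split => // p pp; exists n; apply: hf.
  move=> [f [hf ->]].
  have [N hN] := bound (T := S) (f := f) (fun p pS => hf p (allP hSp p pS)).
  exists N; apply/LM => p pp; case: (boolP (p \in S)) => pS; first exact: hN.
  by apply: (outside0 hS).
Qed.
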